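(* Let $I_H=\{1,\dots,N\}$ and $I_O=\{1,\dots,M\}$, let $\mathcal{H}$ be an $N$-dimensional Hilbert space with orthonormal basis $\{|i\rangle\}_{i\in I_H}$ and $\mathcal{K}$ an $M$-dimensional Hilbert space with orthonormal basis $\{|e_k\rangle\}_{k\in I_O}$. Fix $n$, a stochastic matrix $\Pi_n=(\Pi_{n;ij})_{i,j\in I_H}$ and an emission kernel $(Q^{(n)}_j(k))_{j\in I_H,k\in I_O}$ (nonnegative, $\sum_kQ^{(n)}_j(k)=1$). Define $V_{H;n}|i\rangle=\sum_{j}\sqrt{\Pi_{n;ij}}\,|i\rangle\otimes|j\rangle$, $V_{H,O;n}|j\rangle=\sum_{k}\sqrt{Q^{(n)}_j(k)}\,|j\rangle\otimes|e_k\rangle$, $\mathcal{E}_{H;n}(X)=V_{H;n}^*XV_{H;n}$ on $\mathcal{B}(\mathcal{H}\otimes\mathcal{H})$, $\mathcal{E}_{H,O;n}(Y)=V_{H,O;n}^*YV_{H,O;n}$ on $\mathcal{B}(\mathcal{H}\otimes\mathcal{K})$, and \[\mathcal{F}^{(n)}_{a_n,b_n}(a_{n+1})=\mathcal{E}_{H;n}\bigl(\mathcal{E}_{H,O;n}(a_n\otimes b_n)\otimes a_{n+1}\bigr),\qquad \mathcal{G}^{(n)}_{a_n,b_n}(a_{n+1})=\mathcal{E}_{H,O;n}\bigl(\mathcal{E}_{H;n}(a_n\otimes a_{n+1})\otimes b_n\bigr).\] If the observables are diagonal in the given bases, $a_n=\sum_i\alpha_i|i\rangle\langle i|$, $a_{n+1}=\sum_j\alpha'_j|j\rangle\langle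 j|$, $b_n=\sum_k\beta_k|e_k\rangle\langle e_k|$ with complex coefficients, then \[\mathcal{F}^{(n)}_{a_n,b_n}(a_{n+1})=\mathcal{G}^{(n)}_{a_n,b_n}(a_{n+1})=\sum_{i\in I_H}\alpha_i\Bigl(\sum_{k\in I_O}Q^{(n)}_i(k)\beta_k\Bigr)\Bigl(\sum_{j\in I_H}\Pi_{n;ij}\alpha'_j\Bigr)|i\rangle\langle i|.\]
   Context: A stochastic matrix has nonnegative entries with $\sum_j\Pi_{n;ij}=1$ for every $i$; the maps $V_{H;n},V_{H,O;n}$ are then isometries. $\mathcal{F}^{(n)}$ and $\mathcal{G}^{(n)}$ are the conventional (emission–then–transition) and causal (transition–then–emission) block maps of the hidden quantum Markov model obtained by entangled lifting of a classical hidden Markov model. *)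

(* Defs.v *)
(* Complex numbers are R[i] = complex R over a real closed
   field R (e.g. the real numbers); operators on C^N are N x N matrices,
   acting on column vectors; |i>⊗|j> is the basis vector of index
   mxtens_index (i, j), consistent with the Kronecker product tensmx. *)
From HB Require Import structures.
From mathcomp Require Import all_boot all_order all_algebra.
From mathcomp Require Export mxtens complex.
Set Implicit Arguments. Unset Strict Implicit. Unset Printing Implicit Defensive.
Import Order.TTheory GRing.Theory Num.Theory.
Local Open Scope ring_scope.
Local Open Scope complex_scope.

Section Defs.
Variable R : rcfType.
Local Notation C := R[i].

Definition adjmx m n (A : 'M[C]_(m, n)) : 'M[C]_(n, m) :=
  (map_mx (fun z : C => Num.conj z) A)^T.

Definition stochastic m n (P : 'M[R]_(m, n)) : Prop :=
  (forall i j, 0 <= P i j) /\ (forall i, \sum_j P i j = 1).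

Definition VH N (Pi : 'M[R]_N) : 'M[C]_(N * N, N) :=
  \sum_(i < N) \sum_(j < N)
     (Num.sqrt (Pi i j))%:C *: delta_mx (mxtens_index (i, j)) i.

Definition VHO N M (Q : 'M[R]_(N, M)) : 'M[C]_(N * M, N) :=
  \sum_(j < N) \sum_(k < M)
     (Num.sqrt (Q j k))%:C *: delta_mx (mxtens_index (j, k)) j.

Definition EH N (Pi : 'M[R]_N) (X : 'M[C]_(N * N)) : 'M[C]_N :=
  adjmx (VH Pi) *m X *m VH Pi.

Definition EHO N M (Q : 'M[R]_(N, M)) (Y : 'M[C]_(N * M)) : 'M[C]_N :=
  adjmx (VHO Q) *m Y *m VHO Q.

Definition Fmap N M (Pi : 'M[R]_N) (Q : 'M[R]_(N, M))
  (a : 'M[C]_N) (b : 'M[C]_M) (a' : 'M[C]_N) : 'M[C]_N :=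
  EH Pi (EHO Q (a *t b) *t a').

Definition Gmap N M (Pi : 'M[R]_N) (Q : 'M[R]_(N, M))
  (a : 'M[C]_N) (b : 'M[C]_M) (a' : 'M[C]_N) : 'M[C]_N :=
  EHO Q (EH Pi (a *t a') *t b).

End Defs.

(* Main.v *)
Require Import Defs.
From HB Require Import structures.
From mathcomp Require Import all_boot all_order all_algebra.
From mathcomp Require Import mxtens complex.
Import Order.TTheory GRing.Theory Num.Theory.
Local Open Scope ring_scope.
Local Open Scope complex_scope.

Section Aux.
Variable R : rcfType.
Local Notation C := R[i].

Definition Vgen N K (P : 'M[R]_(N, K)) : 'M[C]_(N * K, N) :=
  \sum_(i < N) \sum_(j < K)
     (Num.sqrt (P i j))%:C *: delta_mx (mxtens_index (i, j)) i.
Arguments Vgen {N K}.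

Lemma ti_eq N K (a i : 'I_N) (b j : 'I_K) :
  (mxtens_index (a, b) == mxtens_index (i, j)) = ((a == i) && (b == j)).
Proof.
apply/eqP/andP => [h|[/eqP -> /eqP ->]] //.
by move: (congr1 (@mxtens_unindex N K) h); rewrite !mxtens_indexK => -[-> ->].
Qed.

Lemma sum_tens N K (F : 'I_(N * K) -> C) :
  \sum_r F r = \sum_(i < N) \sum_(j < K) F (mxtens_index (i, j)).
Proof.
rewrite pair_big /= (reindex (@mxtens_index N K)) /=.
  by apply: eq_bigr => -[].
by exists (@mxtens_unindex N K) => p _; rewrite (mxtens_indexK, mxtens_unindexK).
Qed.

Lemma conjR (x : R) : Num.conj (x%:C) = x%:C.
Proof. exact: conjc_real. Qed.

Lemma conjR' (n : nat) (x : R) : Num.conj (n%:R * x%:C) = n%:R * x%:C.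
Proof.
have -> : n%:R * x%:C = (n%:R * x)%:C :> C by rewrite rmorphM rmorph_nat.
exact: conjR.
Qed.

Lemma hlp (b : nat) (x y z : C) : x * (y * (b%:R * z)) = b%:R * (x * (y * z)).
Proof. by rewrite (mulrCA y) (mulrCA x). Qed.

Lemma sqC (x : R) : 0 <= x -> (Num.sqrt x)%:C * (Num.sqrt x)%:C = x%:C.
Proof. by move=> h; rewrite -rmorphM -expr2 sqr_sqrtr. Qed.

Lemma sum_delta n (i : 'I_n) (G : 'I_n -> C) :
  \sum_a (a == i)%:R * G a = G i.
Proof.
rewrite (bigD1 i) //= eqxx mul1r big1 ?addr0 // => a /negbTE ->.
by rewrite mul0r.
Qed.

Lemma inner K (s e : 'I_K -> C) (x : C) (b : nat) (l : 'I_K) :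
  \sum_a s a * (x *+ b * (e a *+ (a == l))) = s l * (x *+ b * e l).
Proof.
under eq_bigr => a _ do rewrite -[e a *+ _]mulr_natl hlp.
exact: sum_delta.
Qed.

Lemma Vgen_E N K (P : 'M[R]_(N, K)) (a c : 'I_N) (b : 'I_K) :
  @Vgen N K P (mxtens_index (a, b)) c = (a == c)%:R * (Num.sqrt (P a b))%:C.
Proof.
rewrite /Vgen summxE (bigD1 a) //= summxE (bigD1 b) //= !mxE ti_eq !eqxx /=.
rewrite big1 ?addr0; last first.
  by move=> j /negbTE hj; rewrite !mxE ti_eq eqxx eq_sym hj /= mulr0.
rewrite big1 ?addr0; last first.
  move=> i /negbTE hi; rewrite summxE big1 // => j _.
  by rewrite !mxE ti_eq eq_sym hi /= mulr0.
by rewrite mulrC eq_sym.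
Qed.

Lemma E_diag N K (P : 'M[R]_(N, K)) (d : 'I_N -> C) (e : 'I_K -> C)
  (hP : forall i j, 0 <= P i j) :
  adjmx (Vgen P) *m (diag_mx (\row_i d i) *t diag_mx (\row_j e j)) *m Vgen P
  = diag_mx (\row_i (d i * \sum_j (P i j)%:C * e j)).
Proof.
apply/matrixP => i i'; rewrite !mxE sum_tens.
under eq_bigr => k _ do under eq_bigr => l _ do
  rewrite !mxE sum_tens Vgen_E.
under eq_bigr => k _ do under eq_bigr => l _ do under eq_bigr => a _ do
  under eq_bigr => b _ do rewrite tensmxE /adjmx !mxE Vgen_E
     conjR' -mulrA.
under eq_bigr => k _ do under eq_bigr => l _ do
  (under eq_bigr => a _ do rewrite -mulr_sumr; rewrite sum_delta).
under eq_bigr => k _ do under eq_bigr => l _ do rewrite inner.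
rewrite (bigD1 i) //= [X in _ + X]big1 ?addr0; last first.
  by move=> k /negbTE hk; apply: big1 => l _; rewrite eq_sym hk mulr0n mul0r mulr0 mul0r.
rewrite eqxx; case: (i == i'); last by rewrite mulr0n; apply: big1 => l _; rewrite mul0r mulr0.
rewrite mulr1n mulr_sumr; apply: eq_bigr => l _.
by rewrite (_ : true%:R = 1 :> C) // mul1r mulrC !mulrA (sqC _ (hP i l)) [_%:C * d i]mulrC.
Qed.
End Aux.

Theorem mainTheorem4 (R : rcfType) (N M : nat)
  (Pi : 'M[R]_N) (Q : 'M[R]_(N, M))
  (hPi : stochastic Pi) (hQ : stochastic Q)
  (alpha alpha' : 'I_N -> R[i]) (beta : 'I_M -> R[i]) :
  let a := diag_mx (\row_i alpha i) in
  let a' := diag_mx (\row_j alpha' j) in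
  let b := diag_mx (\row_k beta k) in
  Fmap Pi Q a b a' = Gmap Pi Q a b a' /\
  Gmap Pi Q a b a' =
    \sum_(i < N) (alpha i * (\sum_(k < M) (Q i k)%:C * beta k)
                          * (\sum_(j < N) (Pi i j)%:C * alpha' j))
                 *: delta_mx i i.
Proof.
move=> a a' b; case: hPi => hP _; case: hQ => hQ _.
have eF : Fmap Pi Q a b a' = diag_mx (\row_i (alpha i * (\sum_(k < M) (Q i k)%:C * beta k)
                          * (\sum_(j < N) (Pi i j)%:C * alpha' j))).
  rewrite /Fmap /EH /EHO.
  change (VHO Q) with (Vgen R N M Q); change (VH Pi) with (Vgen R N N Pi); rewrite /a /b /a'.
  by rewrite E_diag // E_diag.
have eG : Gmap Pi Q a b a' = diag_mx (\row_i (alpha i * (\sum_(k < M) (Q i k)%:C * beta k)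
                          * (\sum_(j < N) (Pi i j)%:C * alpha' j))).
  rewrite /Gmap /EH /EHO.
  change (VHO Q) with (Vgen R N M Q); change (VH Pi) with (Vgen R N N Pi); rewrite /a /b /a'.
  rewrite E_diag // E_diag //.
  congr diag_mx; apply/rowP => i; rewrite !mxE.
  by rewrite -!mulrA [X in _ * X]mulrC.
split; first by rewrite eF eG.
rewrite eG; apply/matrixP => i j; rewrite summxE (bigD1 i) //= [X in _ + X]big1 ?addr0.
  rewrite !mxE eqxx /=; case: (eqVneq i j) => [eij|hij].
    by rewrite mulr1n (_ : true%:R = 1 :> R[i]) // mulr1.
  by rewrite mulr0n (_ : false%:R = 0 :> R[i]) // mulr0.
by move=> k /negbTE hk; rewrite !mxE eq_sym hk mulr0.
Qed.
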